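(* Let $G$ be a group and $S$ a conjugation invariant generating set of $G$. Suppose $G$ has $m$ linearly independent homogeneous quasi-morphisms each of which is bounded on $S$. Then there is a quasi-isometric embedding of $\mathbb{Z}^m$ into the quotient graph $\mathrm{Cay}(G,S)/\mathrm{Inn}(G)$.
   Context: A quasi-morphism is a function $q:G\to\mathbb{R}$ with $\sup_{g,h}|q(gh)-q(g)-q(h)|<\infty$; it is homogeneous if $q(g^k)=kq(g)$ for all $g$ and $k\in\mathbb Z$. $\mathrm{Cay}(G,S)$ is the graph with vertex set $G$ and an undirected edge between $g$ and $sg$ for $g\in G$, $s\in S$. Since $S$ is conjugation invariant, $G$ acts on $\mathrm{Cay}(G,S)$ by graph automorphisms via conjugation $g\mapsto kgk^{-1}$. The quotient graph $\mathrm{Cay}(G,S)/\mathrm{Inn}(G)$ has as vertices the conjugacy classes of $G$, two classes being joined by an edge iff they have representatives joined by an edge in $\mathrm{Cay}(G,S)$; it carries the path metric with edges of length $1$. $\mathbb Z^m$ carries the $\ell^1$ metric. *)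

(* Defs.v *)
From mathcomp Require Import all_boot all_order all_algebra.
From mathcomp Require Import Rstruct.
Set Implicit Arguments. Unset Strict Implicit. Unset Printing Implicit Defensive.
Import Order.TTheory GRing.Theory Num.Theory.
Local Open Scope ring_scope.

Notation R := Rdefinitions.R.

Record group_axioms (G : Type) (mul : G -> G -> G) (inv : G -> G) (e : G) : Prop :=
  { gassoc : forall x y z, mul x (mul y z) = mul (mul x y) z;
    gid_l  : forall x, mul e x = x;
    ginv_l : forall x, mul (inv x) x = e }.

Section GroupDefs.
Variables (G : Type) (mul : G -> G -> G) (inv : G -> G) (e : G).

Definition gpow (g : G) (k : int) : G :=
  match k with
  | Posz n => iter n (mul g) e
  | Negz n => iter n.+1 (mul (inv g)) e
  end.

Definition conj_invariant (S : G -> Prop) : Prop :=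
  forall s k, S s -> S (mul (mul k s) (inv k)).

Inductive generated (S : G -> Prop) : G -> Prop :=
  | gen_e : generated S e
  | gen_l : forall s g, S s -> generated S g -> generated S (mul s g)
  | gen_li : forall s g, S s -> generated S g -> generated S (mul (inv s) g).

Definition generating_set (S : G -> Prop) : Prop := forall g, generated S g.

Definition quasi_morphism (q : G -> R) : Prop :=
  exists D : R, forall g h, `|q (mul g h) - q g - q h| <= D.

Definition homogeneous (q : G -> R) : Prop :=
  forall g (k : int), q (gpow g k) = k%:~R * q g.

Definition bounded_on (S : G -> Prop) (q : G -> R) : Prop :=
  exists B : R, forall s, S s -> `|q s| <= B.

Definition lin_indep (m : nat) (q : 'I_m -> G -> R) : Prop :=
  forall c : 'I_m -> R, (forall g, \sum_(i < m) c i * q i g = 0) -> forall i, c i = 0.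

Definition conj_class (g : G) : G -> Prop :=
  fun x => exists k, x = mul (mul k g) (inv k).

(* vertices of Cay(G,S)/Inn(G): the conjugacy classes of G *)
Definition cvertex : Type := { P : G -> Prop | exists g, P = conj_class g }.

(* edge of the quotient graph: representatives joined by an edge g -- s g of Cay(G,S) *)
Definition cedge (S : G -> Prop) (P Q : cvertex) : Prop :=
  exists g h s, proj1_sig P g /\ proj1_sig Q h /\ S s /\
                (h = mul s g \/ g = mul s h).

Inductive cwalk (S : G -> Prop) : cvertex -> cvertex -> nat -> Prop :=
  | cwalk0 : forall P, cwalk S P P 0
  | cwalkS : forall P Q T n, cedge S P Q -> cwalk S Q T n -> cwalk S P T n.+1.

Definition dZ (m : nat) (x y : 'I_m -> int) : R :=
  \sum_(i < m) `|x i - y i|%:~R.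

(* The path-metric distance
   d(P,Q) = min length of a walk from P to Q is expressed through walks:
   "d >= a"  <->  every walk has length >= a,
   "d <= b"  <->  some walk has length <= b. *)
Definition qi_embedding (S : G -> Prop) (m : nat) (f : ('I_m -> int) -> cvertex) : Prop :=
  exists K C : R, 1 <= K /\ 0 <= C /\
    forall x y,
      (forall n, cwalk S (f x) (f y) n -> dZ x y / K - C <= n%:R) /\
      (exists n, cwalk S (f x) (f y) n /\ n%:R <= K * dZ x y + C).

End GroupDefs.

(* Main.v *)
Require Import Defs.
From mathcomp Require Import all_boot all_order all_algebra.
From mathcomp Require Import Rstruct.
From mathcomp Require Import zify ring lra.
From Stdlib Require Import FunctionalExtensionality PropExtensionality ProofIrrelevance Classical.
Set Implicit Arguments. Unset Strict Implicit. Unset Printing Implicit Defensive.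
Import Order.TTheory GRing.Theory Num.Theory.
Local Open Scope ring_scope.

Section Grp.
Variables (G : Type) (mul : G -> G -> G) (inv : G -> G) (e : G).
Hypothesis HG : group_axioms mul inv e.

Lemma g_assoc x y z : mul x (mul y z) = mul (mul x y) z.
Proof. exact: (gassoc HG x y z). Qed.
Lemma g_idl x : mul e x = x. Proof. exact: (gid_l HG x). Qed.
Lemma g_invl x : mul (inv x) x = e. Proof. exact: (ginv_l HG x). Qed.

Lemma g_cancel x y z : mul x y = mul x z -> y = z.
Proof.
move=> H. by rewrite -(g_idl y) -(g_invl x) -g_assoc H g_assoc g_invl g_idl.
Qed.

Lemma g_invr x : mul x (inv x) = e.
Proof.
have yy : mul (mul x (inv x)) (mul x (inv x)) = mul x (inv x).
  rewrite -g_assoc (g_assoc (inv x)). by rewrite g_invl g_idl.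
by rewrite -(g_invl (mul x (inv x))) -{3}yy g_assoc g_invl g_idl.
Qed.

Lemma g_idr x : mul x e = x.
Proof. by rewrite -(g_invl x) g_assoc g_invr g_idl. Qed.

Lemma g_invinv x : inv (inv x) = x.
Proof. by rewrite -(g_idr (inv (inv x))) -(g_invl x) g_assoc g_invl g_idl. Qed.

Lemma g_inve : inv e = e.
Proof. by rewrite -{2}(g_invl e) g_idr. Qed.

Lemma gpowS g (k : int) : gpow mul inv e g (k + 1) = mul g (gpow mul inv e g k).
Proof.
case: k => [n|n].
  by rewrite -PoszD addn1.
case: n => [|n].
  by rewrite /= g_idr g_invr.
have -> : Negz n.+1 + 1 = Negz n by rewrite !NegzE; lia.
by rewrite /= g_assoc g_invr g_idl.
Qed.

Lemma gpowP g (k : int) : gpow mul inv e g k = mul (inv g) (gpow mul inv e g (k + 1)).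
Proof. by rewrite gpowS g_assoc g_invl g_idl. Qed.

Lemma gpow0 g : gpow mul inv e g 0 = e. Proof. by []. Qed.
Lemma gpowN1 g : gpow mul inv e g (-1) = inv g. Proof. by rewrite /= g_idr. Qed.

Lemma g_invM a b : inv (mul a b) = mul (inv b) (inv a).
Proof.
apply: (@g_cancel (mul a b)).
by rewrite g_invr -g_assoc (g_assoc b) g_invr g_idl g_invr.
Qed.

Lemma gpow_conj k g (n : nat) :
  gpow mul inv e (mul (mul k g) (inv k)) n = mul (mul k (gpow mul inv e g n)) (inv k).
Proof.
elim: n => [|n IH] /=; first by rewrite g_idr g_invr.
rewrite /= in IH; rewrite IH.
by rewrite -!g_assoc (g_assoc (inv k)) g_invl g_idl.
Qed.

Definition cls (g : G) : cvertex mul inv :=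
  exist _ (conj_class mul inv g) (ex_intro _ g erefl).

Lemma cv_eq (P Q : cvertex mul inv) : proj1_sig P = proj1_sig Q -> P = Q.
Proof.
case: P => P HP; case: Q => Q HQ /= E; subst Q.
by rewrite (proof_irrelevance _ HP HQ).
Qed.

Lemma cls_conj k g : cls (mul (mul k g) (inv k)) = cls g.
Proof.
apply: cv_eq => /=; apply: functional_extensionality => x.
apply: propositional_extensionality; split => -[j ->].
  exists (mul j k). by rewrite g_invM !g_assoc.
exists (mul j (inv k)). rewrite g_invM g_invinv.
by rewrite -!g_assoc (g_assoc (inv k)) g_invl g_idl (g_assoc (inv k)) g_invl g_idl.
Qed.

Lemma cls_rot a c : cls (mul a c) = cls (mul c a).
Proof.
rewrite -(cls_conj c (mul a c)).
by rewrite -!g_assoc g_invr g_idr.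
Qed.

Lemma cls_mem g : proj1_sig (cls g) g.
Proof. exists e. by rewrite g_idl g_inve g_idr. Qed.



Variable S : G -> Prop.

Lemma walk_cat (P Q T : cvertex mul inv) n k : cwalk S P Q n -> cwalk S Q T k -> cwalk S P T (n + k).
Proof.
elim=> [P0|P0 Q0 T0 n0 E W IH] W2 //=.
rewrite addSn; exact: cwalkS E (IH W2).
Qed.

Lemma edge_l s w : S s -> cedge S (cls (mul s w)) (cls w).
Proof. move=> Ss. exists (mul s w), w, s. split; first exact: cls_mem.
split; first exact: cls_mem. by split=> //; right. Qed.

Lemma edge_li s w : S s -> cedge S (cls (mul (inv s) w)) (cls w).
Proof. move=> Ss. exists (mul (inv s) w), w, s. split; first exact: cls_mem.
split; first exact: cls_mem. split=> //; left. by rewrite g_assoc g_invr g_idl. Qed.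

Lemma gen_walk t : generated mul inv e S t -> exists n, forall u, cwalk S (cls (mul t u)) (cls u) n.
Proof.
elim=> [|s t' Ss _ [n IH]|s t' Ss _ [n IH]].
- exists 0%N => u; rewrite g_idl; exact: cwalk0.
- exists n.+1 => u. rewrite -g_assoc. apply: cwalkS (edge_l _ Ss) (IH u).
- exists n.+1 => u. rewrite -g_assoc. apply: cwalkS (edge_li _ Ss) (IH u).
Qed.

Lemma pow_up g l2 (W : forall u, cwalk S (cls (mul (inv g) u)) (cls u) l2) d :
  forall k u, cwalk S (cls (mul (gpow mul inv e g k) u)) (cls (mul (gpow mul inv e g (k + d%:Z)) u)) (d * l2).
Proof.
elim: d => [|d IH] k u.
  rewrite addr0 mul0n; exact: cwalk0.
have -> : k + d.+1%:Z = (k + 1) + d%:Z by lia.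
rewrite mulSn; apply: walk_cat (IH (k + 1) u).
by rewrite gpowP -g_assoc.
Qed.

Lemma pow_down g l1 (W : forall u, cwalk S (cls (mul g u)) (cls u) l1) d :
  forall k u, cwalk S (cls (mul (gpow mul inv e g (k + d%:Z)) u)) (cls (mul (gpow mul inv e g k) u)) (d * l1).
Proof.
elim: d => [|d IH] k u.
  rewrite addr0 mul0n; exact: cwalk0.
have -> : k + d.+1%:Z = (k + 1) + d%:Z by lia.
rewrite mulSnr; apply: walk_cat (IH (k + 1) u) _.
by rewrite gpowS -g_assoc.
Qed.

Hypothesis HSgen : generating_set mul inv e S.

Lemma pow_walk g : exists L : nat, forall (k k' : int) u, exists n,
  cwalk S (cls (mul (gpow mul inv e g k) u)) (cls (mul (gpow mul inv e g k') u)) n /\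
  (n <= L * `|k - k'|)%N.
Proof.
have [l1 W1] := gen_walk (HSgen g).
have [l2 W2] := gen_walk (HSgen (inv g)).
exists (l1 + l2)%N => k k' u.
have [le|lt] := lerP k k'.
  exists (`|k' - k|%N * l2)%N; split.
    have Ek : k + (`|k' - k|%N)%:Z = k' by rewrite gez0_abs ?subr_ge0 //; lia.
    by have := pow_up W2 (`|k' - k|%N) k u; rewrite Ek.
  rewrite distnC mulnC; apply: leq_mul => //; exact: leq_addl.
exists (`|k - k'|%N * l1)%N; split.
  have Ek : k' + (`|k - k'|%N)%:Z = k by rewrite gez0_abs ?subr_ge0 ?ltW //; lia.
  by have := pow_down W1 (`|k - k'|%N) k' u; rewrite Ek.
rewrite mulnC; apply: leq_mul => //; exact: leq_addr.
Qed.

Definition prodg (m : nat) (gs : 'I_m -> G) (x : 'I_m -> int) (l : seq 'I_m) : G :=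
  foldr (fun j acc => mul (gpow mul inv e (gs j) (x j)) acc) e l.

Lemma prod_walk (m : nat) (gs : 'I_m -> G) (L : nat)
  (HL : forall j (k k' : int) u, exists n,
     cwalk S (cls (mul (gpow mul inv e (gs j) k) u)) (cls (mul (gpow mul inv e (gs j) k') u)) n /\
     (n <= L * `|k - k'|)%N) :
  forall l x y w, exists n,
    cwalk S (cls (mul (prodg gs x l) w)) (cls (mul (prodg gs y l) w)) n /\
    (n <= L * \sum_(j <- l) `|x j - y j|)%N.
Proof.
elim=> [|j l IH] x y w /=.
  exists 0%N; split => //; exact: cwalk0.
have [n1 [W1 H1]] := IH x y (mul w (gpow mul inv e (gs j) (x j))).
have [n2 [W2 H2]] := HL j (x j) (y j) (mul (prodg gs y l) w).
exists (n1 + n2)%N; split.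
  have W1' : cwalk S (cls (mul (mul (gpow mul inv e (gs j) (x j)) (prodg gs x l)) w))
      (cls (mul (gpow mul inv e (gs j) (x j)) (mul (prodg gs y l) w))) n1.
    by rewrite -g_assoc cls_rot -g_assoc (cls_rot (gpow mul inv e (gs j) (x j))) -g_assoc.
  apply: walk_cat W1' _.
  by rewrite -g_assoc.
rewrite big_cons mulnDr addnC; exact: leq_add.
Qed.
End Grp.

Lemma small0 (a C : R) : (forall n : nat, `|n%:R * a| <= C) -> a = 0.
Proof.
move=> H; apply/eqP; apply/negPn/negP => a0.
have C0 : 0 <= C by apply: le_trans (H 0%N); rewrite normr_ge0.
have pa : 0 < `|a| by rewrite normr_gt0.
have := archi_boundP (divr_ge0 C0 (ltW pa)).
set n := Num.Def.archi_bound _ => Hn.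
have := H n; rewrite normrM normr_nat.
rewrite (ltr_pdivrMr _ _ pa) in Hn.
by rewrite leNgt Hn.
Qed.

Section QM.
Variables (G : Type) (mul : G -> G -> G) (inv : G -> G) (e : G).
Hypothesis HG : group_axioms mul inv e.
Variable q : G -> R.
Hypothesis Hqm : quasi_morphism mul q.
Hypothesis Hhom : homogeneous mul inv e q.

Lemma q_e : q e = 0.
Proof. by have := Hhom e 0; rewrite gpow0 mul0r. Qed.

Lemma q_inv g : q (inv g) = - q g.
Proof. by have := Hhom g (-1); rewrite gpowN1 // mulN1r. Qed.

Lemma q_conj k g : q (mul (mul k g) (inv k)) = q g.
Proof.
have [D HD] := Hqm.
apply/eqP; rewrite -subr_eq0; apply/eqP.
apply: (@small0 _ (D + D)) => n.
have h1 := Hhom (mul (mul k g) (inv k)) n.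
have h2 := Hhom g n.
rewrite gpow_conj // in h1.
have e1 := HD (mul k (gpow mul inv e g n)) (inv k).
have e2 := HD k (gpow mul inv e g n).
rewrite h1 q_inv in e1; rewrite h2 in e2.
rewrite mulrBr.
have -> : (n%:R : R) = (n%:Z)%:~R by [].
set A := q (mul k (gpow mul inv e g n)) in e1 e2 *.
set X := (n%:Z)%:~R * q (mul (mul k g) (inv k)) in e1 *.
set Y := (n%:Z)%:~R * q g in e1 e2 *.
have -> : X - Y = (X - A - - q k) + (A - q k - Y) by ring.
apply: le_trans (ler_normD _ _) _; exact: lerD.
Qed.

Lemma q_vertex (P : cvertex mul inv) a b : proj1_sig P a -> proj1_sig P b -> q a = q b.
Proof.
case: P => P [g0 E] /=; rewrite E => -[k ->] [k' ->].
by rewrite !q_conj.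
Qed.

Variable S : G -> Prop.
Variable B : R.
Hypothesis HB : forall s, S s -> `|q s| <= B.

Lemma q_walk (P Q : cvertex mul inv) n : cwalk S P Q n ->
  forall D, (forall g h, `|q (mul g h) - q g - q h| <= D) ->
  forall a b, proj1_sig P a -> proj1_sig Q b -> `|q a - q b| <= n%:R * (D + B).
Proof.
move=> W D HD; elim: W => [P0|P0 Q0 T0 n0 [g [h [s [Pg [Qh [Ss Egh]]]]]] W IH] a b Pa Pb.
  by rewrite (q_vertex Pa Pb) subrr normr0 mul0r.
have ega : q a = q g := q_vertex Pa Pg.
have key : `|q g - q h| <= D + B.
  case: Egh => ->.
    have := HD s g; have := HB Ss => h1 h2.
    have -> : q g - q (mul s g) = - (q (mul s g) - q s - q g) - q s by ring.
    apply: le_trans (ler_normB _ _) _; rewrite normrN; exact: lerD.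
  have := HD s h; have := HB Ss => h1 h2.
  have -> : q (mul s h) - q h = (q (mul s h) - q s - q h) + q s by ring.
  apply: le_trans (ler_normD _ _) _; exact: lerD.
have := IH h b Qh Pb.
rewrite ega mulrSr mulrDl mul1r => h3.
have -> : q g - q b = (q g - q h) + (q h - q b) by ring.
apply: le_trans (ler_normD _ _) _; rewrite addrC; exact: lerD.
Qed.

Lemma q_prod m (gs : 'I_m -> G) (x : 'I_m -> int) D
  (HD : forall g h, `|q (mul g h) - q g - q h| <= D) l :
  `|q (prodg mul inv e gs x l) - \sum_(j <- l) (x j)%:~R * q (gs j)| <= (size l)%:R * D.
Proof.
elim: l => [|j l IH] /=.
  by rewrite big_nil q_e subrr normr0 mul0r.
rewrite big_cons -Hhom.
set a := gpow mul inv e (gs j) (x j).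
set b := prodg mul inv e gs x l.
set Sg := \sum_(j <- l) _.
have -> : q (mul a b) - (q a + Sg) = (q (mul a b) - q a - q b) + (q b - Sg) by ring.
apply: le_trans (ler_normD _ _) _; rewrite mulrSr mulrDl mul1r addrC; exact: lerD.
Qed.

End QM.

Section LinAlg.
Variables (G : Type) (m : nat) (q : 'I_m -> G -> R).
Hypothesis Hind : lin_indep q.

Definition vrow (g : G) : 'rV[R]_m := \row_i q i g.

Lemma not_all_sub k (M : 'M[R]_(k, m)) : (k < m)%N -> exists h, ~~ (vrow h <= M)%MS.
Proof.
move=> km.
apply: NNPP => nex.
have allsub h : (vrow h <= M)%MS.
  by apply/negPn/negP => H; apply: nex; exists h.
set C := cokermx M.
have C0 : C != 0.
  rewrite cokermx_eq0 /row_full.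
  by apply: contraTneq (rank_leq_row M) => ->; rewrite -ltnNge.
have [i0 [j0 Hij]] : exists i0 j0, C i0 j0 != 0.
  apply: NNPP => H; move/negP: C0; apply; apply/eqP/matrixP => i j.
  rewrite [X in _ = X]mxE; apply: NNPP => Hn; apply: H; exists i, j; exact/eqP.
move/negP: Hij; apply.
apply/eqP; apply: (Hind (c := fun i => C i j0)) => g.
have E : (vrow g *m C) 0 j0 = 0.
  have := allsub g; rewrite submxE => /eqP/matrixP/(_ 0 j0) ->.
  by rewrite mxE.
rewrite -[RHS]E mxE; apply: eq_bigr => i _; by rewrite [vrow g 0 i]mxE mulrC.
Qed.

Lemma basis_step k : (k <= m)%N -> G -> exists gs : 'I_k -> G,
  \rank (\matrix_(j < k, i < m) q i (gs j)) = k.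
Proof.
elim: k => [|k IH] km g0.
  exists (fun _ => g0); apply/eqP; rewrite -leqn0; exact: rank_leq_row.
have [gs Hr] := IH (ltnW km) g0.
set M := \matrix_(j < k, i < m) q i (gs j).
have [h Hh] := not_all_sub M km.
pose gs' (j : 'I_k.+1) := if (insub (val j) : option 'I_k) is Some j' then gs j' else h.
exists gs'.
set N := \matrix_(j < k.+1, i < m) q i (gs' j).
have MN : (M <= N)%MS.
  apply/row_subP => j.
  have -> : row j M = row (widen_ord (leqnSn k) j) N.
    by apply/rowP => i; rewrite !mxE /gs' /= valK.
  exact: row_sub.
have hN : (vrow h <= N)%MS.
  have -> : vrow h = row ord_max N.
    by apply/rowP => i; rewrite !mxE /gs' /= insubF ?ltnn.
  exact: row_sub.
have ltMN : (M < N)%MS.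
  rewrite ltmxE MN /=; apply/negP => NM; move/negP: Hh; apply.
  exact: submx_trans hN NM.
apply/eqP; rewrite eqn_leq rank_leq_row /=.
by have := rank_ltmx ltMN; rewrite Hr.
Qed.

Lemma exists_basis : G -> exists gs : 'I_m -> G,
  (\matrix_(j < m, i < m) q i (gs j) : 'M[R]_m) \in unitmx.
Proof.
move=> g0; have [gs Hr] := basis_step (leqnn m) g0.
by exists gs; rewrite -row_free_unit /row_free Hr.
Qed.
End LinAlg.

From Stdlib Require Import IndefiniteDescription.
Lemma choice_fun (I T : Type) (P : I -> T -> Prop) :
  (forall i, exists x, P i x) -> exists f : I -> T, forall i, P i (f i).
Proof.
move=> H; exists (fun i => proj1_sig (constructive_indefinite_description _ (H i))).
move=> i; exact: proj2_sig.
Qed.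

Lemma norm1_mul m (z : 'rV[R]_m) (B : 'M[R]_m) :
  \sum_i `|(z *m B) 0 i| <= (\sum_j \sum_i `|B j i|) * \sum_j `|z 0 j|.
Proof.
apply: le_trans (_ : \sum_i \sum_j `|z 0 j| * `|B j i| <= _).
  apply: ler_sum => i _; rewrite mxE; apply: le_trans (ler_norm_sum _ _ _) _.
  by apply: ler_sum => j _; rewrite normrM.
rewrite exchange_big /= mulr_sumr; apply: ler_sum => j _.
rewrite -mulr_sumr mulrC; apply: ler_wpM2r; first exact: normr_ge0.
rewrite [X in _ <= X](bigD1 j) //= lerDl. apply: sumr_ge0 => k _; apply: sumr_ge0 => i _; exact: normr_ge0.
Qed.

Unset Implicit Arguments.
Theorem mainTheorem3 (G : Type) (mul : G -> G -> G) (inv : G -> G) (e : G)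
  (HG : group_axioms mul inv e) (S : G -> Prop)
  (HSconj : conj_invariant mul inv S) (HSgen : generating_set mul inv e S)
  (m : nat) (q : 'I_m -> G -> Rdefinitions.R)
  (Hqm : forall i, quasi_morphism mul (q i))
  (Hhom : forall i, homogeneous mul inv e (q i))
  (Hbdd : forall i, bounded_on S (q i))
  (Hind : lin_indep q) :
  exists f : ('I_m -> int) -> cvertex mul inv, qi_embedding S f.
Proof.
have [gs Au] := exists_basis Hind e.
set A := \matrix_(j < m, i < m) q i (gs j) in Au.
have [Df HD] := choice_fun Hqm.
have [Bf HB] := choice_fun Hbdd.
have [Lf HL] := choice_fun (fun j => pow_walk HG HSgen (gs j)).
set L := (\sum_j Lf j)%N.
have HLu : forall j (k k' : int) u, exists n,
    cwalk S (cls mul inv (mul (gpow mul inv e (gs j) k) u))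
      (cls mul inv (mul (gpow mul inv e (gs j) k') u)) n /\ (n <= L * `|k - k'|)%N.
  move=> j k k' u; have [n [W Hn]] := HL j k k' u; exists n; split => //.
  apply: leq_trans Hn _; apply: leq_mul => //.
  by rewrite /L (bigD1 j) //= leq_addr.
have HB' i s : S s -> `|q i s| <= `|Bf i| by move=> Ss; apply: le_trans (HB i s Ss) (ler_norm _).
have D0 i : 0 <= Df i by apply: le_trans (HD i e e); exact: normr_ge0.
set l := index_enum 'I_m.
set sz : R := (size l)%:R.
set P := fun x => prodg mul inv e gs x l.
set Mq := \sum_i (Df i + `|Bf i|).
set Dt := \sum_i Df i.
set cB := \sum_j \sum_i `|invmx A j i|.
have Mq0 : 0 <= Mq by apply: sumr_ge0 => i _; apply: addr_ge0 => //; exact: normr_ge0.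
have Dt0 : 0 <= Dt by apply: sumr_ge0.
have cB0 : 0 <= cB by apply: sumr_ge0 => j _; apply: sumr_ge0 => i _; exact: normr_ge0.
have sz0 : 0 <= sz by exact: ler0n.
exists (fun x => cls mul inv (P x)), (1 + cB * (Mq + 1) + L%:R), (cB * (2 * sz * Dt)).
have K1 : 1 <= 1 + cB * (Mq + 1) + L%:R.
  rewrite -addrA lerDl; apply: addr_ge0; last exact: ler0n.
  by apply: mulr_ge0 => //; apply: addr_ge0.
have C0 : 0 <= cB * (2 * sz * Dt) by apply: mulr_ge0 => //; apply: mulr_ge0 => //; apply: mulr_ge0.
split => //; split => // x y.
have dZ0 : 0 <= dZ x y by apply: sumr_ge0 => i _; rewrite ler0z.
have dZE : dZ x y = \sum_j `|((x j)%:~R - (y j)%:~R : R)|.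
  by apply: eq_bigr => j _; rewrite intr_norm rmorphB.
split.
  move=> n W.
  set xr : 'rV[R]_m := \row_j ((x j)%:~R - (y j)%:~R).
  have Ex i z : `|q i (P z) - \sum_(j <- l) (z j)%:~R * q i (gs j)| <= sz * Df i.
    exact: (q_prod (Hhom i) gs z (HD i) l).
  have Wi i : `|q i (P x) - q i (P y)| <= n%:R * (Df i + `|Bf i|).
    exact: (q_walk HG (Hqm i) (Hhom i) (HB' i) W (HD i) (cls_mem HG _) (cls_mem HG _)).
  set u := xr *m A.
  have xrE : xr = u *m invmx A by rewrite /u mulmxK.
  have uE i : u 0 i = (q i (P x) - q i (P y)) - (q i (P x) - \sum_(j <- l) (x j)%:~R * q i (gs j))
       + (q i (P y) - \sum_(j <- l) (y j)%:~R * q i (gs j)).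
    rewrite !mxE.
    set S1 := \sum_(j <- l) (x j)%:~R * q i (gs j).
    set S2 := \sum_(j <- l) (y j)%:~R * q i (gs j).
    have -> : q i (P x) - q i (P y) - (q i (P x) - S1) + (q i (P y) - S2) = S1 - S2 by ring.
    rewrite /S1 /S2 -sumrB; apply: eq_bigr => j _; by rewrite !mxE mulrBl.
  have sumu : \sum_i `|u 0 i| <= n%:R * Mq + 2 * sz * Dt.
    rewrite /Mq /Dt mulr_sumr mulr_sumr -big_split /=; apply: ler_sum => i _.
    rewrite uE.
    set a := q i (P x) - q i (P y).
    set b := q i (P x) - _.
    set c := q i (P y) - _.
    have h1 := Wi i; have h2 := Ex i x; have h3 := Ex i y.
    have h4 := ler_normD (a - b) c; have h5 := ler_normB a b.
    have -> : 2 * sz * Df i = sz * Df i + sz * Df i by ring.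
    rewrite -/a -/b -/c in h1 h2 h3 h4 h5 *.
    lra.
  have dZu : dZ x y <= cB * (n%:R * Mq + 2 * sz * Dt).
    have -> : dZ x y = \sum_j `|xr 0 j|.
      by rewrite dZE; apply: eq_bigr => j _; rewrite mxE.
    rewrite xrE; apply: le_trans (norm1_mul _ _) _.
    by apply: ler_wpM2l.
  set K := 1 + cB * (Mq + 1) + L%:R in K1 *.
  set C := cB * (2 * sz * Dt) in C0 *.
  have Kp : 0 < K by apply: lt_le_trans K1.
  have n0 : 0 <= (n%:R : R) by exact: ler0n.
  have L0 : 0 <= (L%:R : R) by exact: ler0n.
  have KM : cB * Mq <= K by rewrite /K; nra.
  rewrite lerBlDr ler_pdivrMr //.
  have E1 : cB * (n%:R * Mq + 2 * sz * Dt) = n%:R * (cB * Mq) + C by rewrite /C; ring.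
  rewrite E1 in dZu.
  nra.
have [n [W Hn]] := prod_walk HG HLu l x y e.
rewrite !(g_idr HG) in W.
exists n; split => //.
apply: le_trans (_ : L%:R * dZ x y <= _).
  have -> : L%:R * dZ x y = (L * \sum_(j <- l) `|x j - y j|)%N%:R.
    rewrite natrM natr_sum /dZ; congr (_ * _); apply: eq_bigr => j _.
  by rewrite ler_nat.
rewrite -[X in X <= _]addr0; apply: lerD => //; apply: ler_wpM2r => //.
by rewrite lerDr; apply: addr_ge0 => //; apply: mulr_ge0 => //; apply: addr_ge0.
Qed.
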